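(* Let $Q$ be a commutative noetherian local ring and let $f,g\in Q$ be regular elements of $Q$ such that $(f)\cap(g)=(fg)$. Set $A=Q/(fg)$ and let $x,y\in A$ be the cosets of $f,g$. If $\operatorname{depth} Q>2$, then there exist elements of $A$ that are regular on the $A$-module $A/(x,y)$.
   Context: An element $a\in A$ is regular on a finitely generated $A$-module $M$ if $a$ is a non-unit and multiplication by $a$ on $M$ is injective. *)

(* Defs.v *)
From HB Require Import structures.
From mathcomp Require Import all_boot all_order all_algebra.
Set Implicit Arguments. Unset Strict Implicit. Unset Printing Implicit Defensive.
Import GRing.Theory.
Local Open Scope ring_scope.

Definition is_ideal (R : comRingType) (I : R -> Prop) : Prop :=
  [/\ I 0, (forall x y, I x -> I y -> I (x + y)) & (forall r x, I x -> I (r * x))].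

Definition proper_ideal (R : comRingType) (I : R -> Prop) : Prop :=
  is_ideal I /\ ~ I 1.

Definition maximal_ideal (R : comRingType) (I : R -> Prop) : Prop :=
  proper_ideal I /\
  forall J : R -> Prop, proper_ideal J -> (forall x, I x -> J x) -> forall x, J x <-> I x.

Definition local_ring (R : comRingType) : Prop :=
  (exists m : R -> Prop, maximal_ideal m) /\
  forall m m' : R -> Prop, maximal_ideal m -> maximal_ideal m' -> forall x, m x <-> m' x.

Definition ideal_gen (R : comRingType) (s : seq R) (x : R) : Prop :=
  exists c : seq R, size c = size s /\ x = \sum_(i < size s) c`_i * s`_i.

Definition noetherian (R : comRingType) : Prop :=
  forall I : R -> Prop, is_ideal I -> exists s : seq R, forall x, I x <-> ideal_gen s x.

(* a is regular on the R-module R/(s): a is a non-unit and multiplication by a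
   on R/(s) is injective, i.e. a*b in (s) implies b in (s). *)
Definition regular_on_quot (R : comUnitRingType) (s : seq R) (a : R) : Prop :=
  a \isn't a GRing.unit /\ forall b, ideal_gen s (a * b) -> ideal_gen s b.

Definition regular_elt (R : comUnitRingType) (a : R) : Prop :=
  a \isn't a GRing.unit /\ forall b, a * b = 0 -> b = 0.

Definition regular_seq (R : comUnitRingType) (s : seq R) : Prop :=
  (forall i, (i < size s)%N -> regular_on_quot (take i s) s`_i) /\ ~ ideal_gen s 1.

(* depth R > n, depth R being the supremum of lengths of R-regular sequences
   (in the maximal ideal of the local ring R, i.e. of non-units). *)
Definition depth_gt (R : comUnitRingType) (n : nat) : Prop :=
  exists s : seq R, (n < size s)%N /\ regular_seq s.

(* Main.v *)
Require Import Defs.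
From HB Require Import structures.
From mathcomp Require Import all_boot all_order all_algebra.
From mathcomp Require Import ring.
From Stdlib Require Import Classical ClassicalEpsilon.
Import GRing.Theory.
Local Open Scope ring_scope.

Lemma id_sub (Q : comRingType) (I : Q -> Prop) x y : is_ideal I -> I x -> I y -> I (x - y).
Proof. case=> _ HD HM Hx Hy. have -> : x - y = x + (-1) * y by ring. by apply: HD => //; apply: HM. Qed.

Lemma id_mulr (Q : comRingType) (I : Q -> Prop) x r : is_ideal I -> I x -> I (x * r).
Proof. case=> _ _ HM Hx. rewrite mulrC. exact: HM. Qed.

Lemma gen_nil (Q : comRingType) x : @ideal_gen Q [::] x <-> x = 0.
Proof. split. by case=> c [_ ->]; rewrite big_ord0. move=> ->; exists [::]; split => //; by rewrite big_ord0. Qed.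

Lemma gen_cons (Q : comRingType) (a : Q) s x :
  ideal_gen (a :: s) x <-> exists r y, ideal_gen s y /\ x = r * a + y.
Proof.
split.
  case=> [[|r c]] [//= [Hc] ->]. exists r, (\sum_(i < size s) c`_i * s`_i); split.
    by exists c.
  by rewrite big_ord_recl.
case=> r [y [[c [Hc ->]] ->]]. exists (r :: c); split; first by rewrite /= Hc.
by rewrite big_ord_recl.
Qed.

Lemma gen_sub (Q : comRingType) (I : Q -> Prop) s x : is_ideal I ->
  (forall y, List.In y s -> I y) -> ideal_gen s x -> I x.
Proof.
move=> HI; elim: s x => [|a s IH] x Hs.
  move/gen_nil=> ->. by case: HI.
case/gen_cons=> r [y [Hy ->]]. case: (HI) => _ HD HM. apply: HD.
  apply: HM; apply: Hs; by left.
apply: IH => //; move=> z Hz; apply: Hs; by right.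
Qed.

Lemma gen0 (Q : comRingType) (s : seq Q) : ideal_gen s 0.
Proof. by exists (nseq (size s) 0); rewrite size_nseq; split => //; rewrite big1 // => i _; rewrite nth_nseq if_same mul0r. Qed.

Lemma gen_mem (Q : comRingType) (s : seq Q) y : List.In y s -> ideal_gen s y.
Proof.
elim: s => [//|a s IH] /= [->|H]; apply/gen_cons.
  exists 1, 0; split; [exact: gen0| by rewrite mul1r addr0].
exists 0, y; split; [exact: IH|by rewrite mul0r add0r].
Qed.

Lemma gen_ideal (Q : comRingType) (s : seq Q) : is_ideal (ideal_gen s).
Proof.
elim: s => [|a s [H0 HD HM]].
  split; first by apply/gen_nil.
    by move=> x y /gen_nil -> /gen_nil ->; apply/gen_nil; rewrite addr0.
  by move=> r x /gen_nil ->; apply/gen_nil; rewrite mulr0.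
split; first exact: gen0.
  move=> x y /gen_cons [r [u [Hu ->]]] /gen_cons [r' [u' [Hu' ->]]].
  apply/gen_cons; exists (r + r'), (u + u'); split; [exact: HD|ring].
move=> t x /gen_cons [r [u [Hu ->]]]. apply/gen_cons; exists (t * r), (t * u); split; [exact: HM|ring].
Qed.

Definition incl {Q : Type} (I J : Q -> Prop) := forall x, I x -> J x.

Lemma maxel (Q : comUnitRingType) (F : (Q -> Prop) -> Prop) :
  noetherian Q -> (forall K, F K -> is_ideal K) -> (exists K, F K) ->
  exists M, F M /\ forall N, F N -> incl M N -> incl N M.
Proof.
move=> HN HF [K0 FK0]. apply: NNPP => Hn.
have H : forall M, F M -> exists N, F N /\ incl M N /\ ~ incl N M.
  move=> M FM; apply: NNPP => Hc; apply: Hn; exists M; split => // N FN MN.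
  apply: NNPP => NM; apply: Hc; by exists N.
pose P M N := F N /\ incl M N /\ ~ incl N M.
pose step M := epsilon (inhabits M) (P M).
pose c := fix c n := if n is n'.+1 then step (c n') else K0.
have Hc : forall n, F (c n) /\ P (c n) (c n.+1).
  elim=> [|n [Fn _]] /=.
    have := H _ FK0 => /(epsilon_spec (inhabits K0)) Hs; split => //.
  have Pn : P (c n) (c n.+1) by apply: (epsilon_spec (inhabits (c n))); exact: H.
  case: Pn => F1 _; split => //. apply: (epsilon_spec (inhabits (c n.+1))); exact: H.
have mono : forall n k, incl (c n) (c (n + k)%N).
  move=> n; elim=> [|k IH] x Hx; first by rewrite addn0.
  rewrite addnS; have [_ [_ [Hi _]]] := Hc (n + k)%N. exact/Hi/IH.
pose U x := exists n, c n x.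
have Uid : is_ideal U.
  split.
  - exists 0%N; by case: (HF _ (proj1 (Hc 0%N))).
  - move=> x y [n Hx] [m Hy]; exists (n + m)%N.
    case: (HF _ (proj1 (Hc (n+m)%N))) => _ HD _; apply: HD.
      exact: mono. rewrite addnC; exact: mono.
  - move=> r x [n Hx]; exists n; case: (HF _ (proj1 (Hc n))) => _ _ HM; exact: HM.
have [s Hs] := HN U Uid.
have Us : forall y, List.In y s -> U y by move=> y /gen_mem /Hs.
have [N HNs] : exists N, forall y, List.In y s -> c N y.
  elim: s {Hs} Us => [|a s IH] Us; first by exists 0%N.
  have [N1 H1] := IH (fun y Hy => Us y (or_intror Hy)).
  have [N2 H2] := Us a (or_introl erefl).
  exists (N1 + N2)%N => y /= [<-|Hy].
    rewrite addnC; exact: mono.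
  exact/mono/H1.
have [_ [_ [_ Hni]]] := Hc N. apply: Hni => x Hx.
apply: (@gen_sub _ _ s _ (HF _ (proj1 (Hc N)))) => //. apply/Hs; by exists N.+1.
Qed.

Definition nu {Q : comUnitRingType} (a : Q) : Prop := a \isn't a GRing.unit.

Lemma nu_mul (Q : comUnitRingType) (a r : Q) : nu a -> nu (r * a).
Proof. rewrite /nu unitrM => /negP H; apply/negP => /andP [_ ?]; exact: H. Qed.

Lemma unit_in (Q : comUnitRingType) (I : Q -> Prop) u : is_ideal I -> u \is a GRing.unit -> I u -> I 1.
Proof. move=> [_ _ HM] Hu Iu. rewrite -(mulVr Hu); exact: HM. Qed.

Lemma nu_max (Q : comUnitRingType) (a : Q) : noetherian Q -> nu a ->
  exists M, Defs.maximal_ideal M /\ M a.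
Proof.
move=> HN Ha.
pose F (K : Q -> Prop) := Defs.proper_ideal K /\ incl (fun v => exists r, v = r * a) K.
have H1 : forall K, F K -> is_ideal K by move=> K [[]].
have H2 : exists K, F K.
  exists (fun v => exists r, v = r * a); split; last by [].
  split; first split.
  + by exists 0; rewrite mul0r.
  + by move=> x y [r ->] [s ->]; exists (r + s); rewrite mulrDl.
  + by move=> t x [r ->]; exists (t * r); rewrite mulrA.
  + case=> r Hr; apply: (negP Ha); apply/unitrPr; exists r; by rewrite Hr mulrC.
have [M [[PM HM] Mmax]] := @maxel Q F HN H1 H2.
exists M; split; last by apply: HM; exists 1; rewrite mul1r.
split => // J PJ MJ x; split; last exact: MJ.
apply: (Mmax J) => //; split => // v Hv; exact/MJ/HM.
Qed.

Lemma nu_add (Q : comUnitRingType) (a b : Q) : noetherian Q -> local_ring Q ->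
  nu a -> nu b -> nu (a + b).
Proof.
move=> HN [_ HL] Ha Hb.
have [Ma [MMa Maa]] := nu_max _ _ HN Ha. have [Mb [MMb Mbb]] := nu_max _ _ HN Hb.
have Mab : Ma b by apply/(HL _ _ MMa MMb).
case: MMa => [[[_ HD HM] H1] _].
have I0 : Ma 0 by rewrite -(mul0r a); apply: HM.
apply/negP => Hu. apply: H1. apply: (@unit_in _ Ma (a + b)) => //. exact: HD.
Qed.

Lemma nu_sub (Q : comUnitRingType) (a b : Q) : noetherian Q -> local_ring Q ->
  nu a -> nu b -> nu (a - b).
Proof.
move=> HN HL Ha Hb. apply: nu_add => //. have -> : - b = (-1) * b by ring. exact: nu_mul.
Qed.

Lemma nu1 (Q : comUnitRingType) : ~ nu (1 : Q).
Proof. by rewrite /nu unitr1. Qed.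

Lemma nu0 (Q : comUnitRingType) : nu (0 : Q).
Proof. by rewrite /nu unitr0. Qed.

Definition primeI {Q : comUnitRingType} (P : Q -> Prop) :=
  is_ideal P /\ ~ P 1 /\ forall a b, P (a * b) -> P a \/ P b.

Lemma prod_avoid (Q : comUnitRingType) (P : Q -> Prop) (T : seq (Q -> Prop)) :
  primeI P -> (forall K, List.In K T -> is_ideal K) ->
  (forall K, List.In K T -> exists q, K q /\ ~ P q) ->
  exists w, (forall K, List.In K T -> K w) /\ ~ P w.
Proof.
move=> [HP [P1 Pp]]; elim: T => [|K T IH] HT HTq.
  by exists 1.
have [w [Hw Pw]] := IH (fun K' H => HT K' (or_intror H)) (fun K' H => HTq K' (or_intror H)).
have [q [Kq Pq]] := HTq K (or_introl erefl).
exists (q * w); split.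
  move=> K' [<-|HK']. apply: id_mulr => //; apply: HT; by simpl; left.
  case: (HT K' (or_intror HK')) => _ _ HM; by apply: HM; apply: Hw.
by case/Pp.
Qed.

Lemma PA (Q : comUnitRingType) n : forall (I : Q -> Prop) (T : seq (Q -> Prop)),
  (size T <= n)%N -> is_ideal I -> (forall P, List.In P T -> primeI P) ->
  (forall x, I x -> exists P, List.In P T /\ P x) -> exists P, List.In P T /\ incl I P.
Proof.
elim: n => [|n IHn] I [|P T] //= Hs HI HT Hc.
- case: HI => I0 _ _; by case: (Hc 0 I0) => ? [].
- case: HI => I0 _ _; by case: (Hc 0 I0) => ? [].
apply: NNPP => Hno.
have nIn : forall K, List.In K (P :: T) -> exists x, I x /\ ~ K x.
  move=> K HK; apply: NNPP => H; apply: Hno; exists K; split => // x Ix.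
  apply: NNPP => Kx; apply: H; by exists x.
have [x0 [Ix0 Hx0]] : exists x, I x /\ forall K, List.In K T -> ~ K x.
  apply: NNPP => H.
  have [K [HK IK]] : exists K, List.In K T /\ incl I K.
    apply: (IHn I T) => //. by move=> K HK; apply: HT; right.
    move=> x Ix; case: (Hc x Ix) => K [[<-|HK] Kx].
      apply: NNPP => H2; apply: H; exists x; split => // K' HK' K'x; apply: H2; by exists K'.
    by exists K.
  have [x [Ix Kx]] := nIn K (or_intror HK). exact/Kx/IK.
have Px0 : P x0.
  case: (Hc x0 Ix0) => K [[<-|HK] Kx] //. by case: (Hx0 K HK).
have [HPi [P1 Pp]] := HT P (or_introl erefl).
case: (classic (exists K, List.In K T /\ incl K P)) => [[K [HK KP]]|Hinc].
  have [T1 [T2 HT12]] := List.in_split _ _ HK.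
  have [K' [HK' IK']] : exists K', List.In K' (P :: T1 ++ T2) /\ incl I K'.
    apply: (IHn I (P :: T1 ++ T2)) => //.
    - by move: Hs; rewrite HT12 /= !size_cat /= addnS.
    - move=> K' HK'; apply: HT. case: HK' => [<-|HK']; first by simpl; left.
      right; rewrite HT12; apply List.in_or_app; case: (List.in_app_or _ _ _ HK') => H; [by simpl; left|by right; simpl; right].
    - move=> x Ix; case: (Hc x Ix) => K' [HK' K'x].
      case: HK' => [E|]; first by exists P; split; [simpl; left|rewrite E].
      rewrite HT12 => HH; case: (List.in_app_or _ _ _ HH) => [H|H2]; last case: H2 => [E|H].
      + exists K'; split => //; simpl; right; apply List.in_or_app; by simpl; left.
      + exists P; split; [by simpl; left| by apply: KP; rewrite E].
      + exists K'; split => //; simpl; right; apply List.in_or_app; by right.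
  apply: Hno; exists K'; split => //.
  case: HK' => [<-|HK']; [by simpl; left|simpl; right; rewrite HT12].
  apply List.in_or_app; case: (List.in_app_or _ _ _ HK') => H; [by simpl; left|by right; simpl; right].
have [w [Tw Pw]] : exists w, (forall K, List.In K T -> K w) /\ ~ P w.
  apply: prod_avoid; first exact: (HT P (or_introl erefl)).
    by move=> K HK; case: (HT K (or_intror HK)).
  move=> K HK; apply: NNPP => H; apply: Hinc; exists K; split => // x Kx.
  apply: NNPP => Px; apply: H; by exists x.
have [i [Ii Pi]] := nIn P (or_introl erefl).
have Pw2 : ~ P (i * w) by case/Pp.
have HIy : I (x0 + i * w).
  case: (HI) => _ HD _; apply: HD => //; exact: id_mulr.
case: (Hc _ HIy) => K [[<-|HK] Ky].
  apply: Pw2. have -> : i * w = (x0 + i * w) - x0 by ring. exact: id_sub.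
apply: (Hx0 K HK). have -> : x0 = (x0 + i * w) - i * w by ring.
have KI := proj1 (HT K (or_intror HK)).
apply: id_sub => //. case: KI => _ _ HM; by apply: HM; apply: Tw.
Qed.

Definition colon {Q : comUnitRingType} (J : Q -> Prop) u := fun a => J (a * u).
Definition zd {Q : comUnitRingType} (J : Q -> Prop) a := exists u, ~ J u /\ J (a * u).
Definition AssP {Q : comUnitRingType} (J P : Q -> Prop) :=
  exists v, ~ J v /\ (forall a, P a <-> J (a * v)) /\ primeI P.

Lemma colon_ideal (Q : comUnitRingType) (J : Q -> Prop) u : is_ideal J -> is_ideal (colon J u).
Proof.
case=> H0 HD HM; split; rewrite /colon.
- by rewrite mul0r.
- by move=> x y Hx Hy; rewrite mulrDl; apply: HD.
- by move=> r x Hx; rewrite -mulrA; apply: HM.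
Qed.

Lemma ideal_ext (Q : comUnitRingType) (P P' : Q -> Prop) :
  is_ideal P -> (forall x, P x <-> P' x) -> is_ideal P'.
Proof.
case=> H0 HD HM E; split.
- exact/E.
- by move=> x y /E Hx /E Hy; apply/E; apply: HD.
- by move=> r x /E Hx; apply/E; apply: HM.
Qed.

Lemma prime_ext (Q : comUnitRingType) (P P' : Q -> Prop) :
  primeI P -> (forall x, P x <-> P' x) -> primeI P'.
Proof.
case=> HI [H1 Hp] E; split; first exact: ideal_ext E.
split; first by move/E.
by move=> a b /E /Hp [/E|/E]; [left|right].
Qed.

Lemma AssP_ext (Q : comUnitRingType) (J P P' : Q -> Prop) :
  AssP J P -> (forall x, P x <-> P' x) -> AssP J P'.
Proof.
case=> v [Jv [Hv Hp]] E; exists v; split => //; split; last exact: prime_ext E.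
move=> a; rewrite -E; exact: Hv.
Qed.

Lemma zd_ass (Q : comUnitRingType) (J : Q -> Prop) a : noetherian Q -> is_ideal J ->
  zd J a -> exists P, AssP J P /\ P a.
Proof.
move=> HN HJ [u [Ju Jau]].
pose F K := exists v, ~ J v /\ K = colon J v /\ incl (colon J u) K.
have H1 : forall K, F K -> is_ideal K.
  by move=> K [v [_ [-> _]]]; apply: colon_ideal.
have H2 : exists K, F K by exists (colon J u), u; split => //; split.
have [M [[v [Jv [EM Hu]]] Mmax]] := @maxel Q F HN H1 H2. subst M.
case: (HJ) => J0 HD HM.
exists (colon J v); split; last exact: Hu.
exists v; split => //; split => //.
split; first exact: colon_ideal.
split; first by rewrite /colon mul1r.
move=> x y; rewrite /colon => Hxy. apply: NNPP => Hn.
have Hx : ~ J (x * v) by move=> H; apply: Hn; left.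
have : incl (colon J (x * v)) (colon J v).
  apply: Mmax; first by exists (x * v); split => //; split => // b /Hu Hb; rewrite /colon mulrCA; apply: HM.
  move=> b; rewrite /colon => Hb. rewrite mulrCA; exact: HM.
move/(_ y); rewrite /colon mulrCA mulrA => /(_ Hxy) Hy. apply: Hn; by right.
Qed.

Lemma ass_finite (Q : comUnitRingType) : noetherian Q -> forall (J : Q -> Prop), is_ideal J ->
  exists T : seq (Q -> Prop), forall P, AssP J P -> exists P', List.In P' T /\ forall x, P x <-> P' x.
Proof.
move=> HN J0 HJ0; apply: NNPP => Hn0.
pose St (J : Q -> Prop) := exists T : seq (Q -> Prop),
  forall P, AssP J P -> exists P', List.In P' T /\ forall x, P x <-> P' x.
pose F K := is_ideal K /\ ~ St K.
have [J [[HJ HnJ] Jmax]] := @maxel Q F HN (fun K H => proj1 H) (ex_intro _ J0 (conj HJ0 Hn0)).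
apply: HnJ.
case: (HJ) => J0' HD HM.
case: (classic (J 1)) => J1.
  exists [::] => P [v [Jv _]]; exfalso; apply: Jv; rewrite -(mul1r v); exact: id_mulr.
have [P0 [[u [Ju [Hu HP0]]] _]] : exists P, AssP J P /\ P 0.
  apply: zd_ass => //; exists 1; split => //; by rewrite mul0r.
pose J' x := exists j r, J j /\ x = j + r * u.
have HJ' : is_ideal J'.
  split.
  - by exists 0, 0; split => //; rewrite mul0r addr0.
  - move=> x y [j [r [Jj ->]]] [j' [r' [Jj' ->]]]; exists (j + j'), (r + r'); split.
      exact: HD. ring.
  - move=> t x [j [r [Jj ->]]]; exists (t * j), (t * r); split. exact: HM. ring.
have JJ' : incl J J' by move=> x Jx; exists x, 0; split => //; rewrite mul0r addr0.
have StJ' : St J'.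
  apply: NNPP => H; have := Jmax J' (conj HJ' H) JJ' u.
  have : J' u by exists 0, 1; split => //; rewrite mul1r add0r.
  by move=> + /(_ _) => /[swap] /[apply].
case: StJ' => T' HT'.
exists (P0 :: T') => P [v [Jv [Hv HP]]].
case: (classic (exists r, J' (r * v) /\ ~ J (r * v))) => [[r [[j [t [Jj Ej]]] Jrv]]|Hno].
  exists P0; split; first by simpl; left.
  have Pr : ~ P r by move/Hv.
  have Jtu : ~ J (t * u).
    move=> H; apply: Jrv; rewrite Ej; exact: HD.
  have P0t : ~ P0 t by move/Hu.
  move=> x; split.
  - move=> Px. apply: (proj2 (Hu x)).
    have : J (x * (r * v)) by rewrite mulrCA; apply: HM; exact/Hv.
    rewrite Ej mulrDr => H.
    have : J (x * (t * u)).
      have -> : x * (t * u) = (x * j + x * (t * u)) - x * j by ring.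
      apply: (id_sub _ _ _ _ HJ H); rewrite mulrC; exact: id_mulr.
    rewrite mulrA -Hu; case: HP0 => _ [_ Hp] /Hp [/Hu //|//].
  - move=> /Hu Jxu.
    have : J (x * (r * v)).
      rewrite Ej mulrDr; apply: HD; first by apply: HM.
      by rewrite mulrCA; apply: HM.
    rewrite mulrA -Hv; case: HP => _ [_ Hp2] /Hp2 [//|//].
have : AssP J' P.
  exists v; split.
    move=> H; apply: Hno; exists 1; rewrite mul1r; split => //.
  split => // a; rewrite Hv; split; first exact: JJ'.
  move=> H; apply: NNPP => H2; apply: Hno; by exists a.
case/HT' => P' [HP' E]; exists P'; split => //; by simpl; right.
Qed.

Lemma In_filter (T : Type) (p : pred T) s x : List.In x (filter p s) <-> p x /\ List.In x s.
Proof.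
elim: s => [|a s IH] /=; first by split => // [[]].
case Ha: (p a) => /=.
  split; first by case=> [<-|/IH [? ?]]; split => //; [left|right].
  by case=> px [->|H]; [left|right; apply/IH].
rewrite IH; split; first by case=> px H; split => //; right.
by case=> px [E|H] //; move: px; rewrite -E Ha.
Qed.

Definition nuI {Q : comUnitRingType} : Q -> Prop := fun a => nu a.

Lemma nu_ideal (Q : comUnitRingType) : noetherian Q -> local_ring Q -> is_ideal (@nuI Q).
Proof.
move=> HN HL; split.
- exact: nu0.
- by move=> x y Hx Hy; apply: nu_add.
- by move=> r x Hx; apply: nu_mul.
Qed.

Lemma soc_of (Q : comUnitRingType) (J : Q -> Prop) : noetherian Q -> local_ring Q -> is_ideal J ->
  (forall a, nu a -> zd J a) -> exists u, ~ J u /\ forall a, nu a -> J (a * u).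
Proof.
move=> HN HL HJ Hz.
have [T HT] := ass_finite _ HN J HJ.
pose b P := if excluded_middle_informative (AssP J P) then true else false.
have bP : forall P, b P -> AssP J P.
  by move=> P; rewrite /b; case: excluded_middle_informative.
have [P [HP IP]] : exists P, List.In P (filter b T) /\ incl (@nuI Q) P.
  apply: (PA _ (size (filter b T))) => //.
  - exact: nu_ideal.
  - by move=> P /In_filter [/bP [v [_ [_ ?]]] _].
  - move=> x Hx. have [P0 [AP0 P0x]] := zd_ass _ _ _ HN HJ (Hz x Hx).
    have [P' [HP' E]] := HT P0 AP0.
    exists P'; split; last exact/E.
    apply/In_filter; split => //. rewrite /b; case: excluded_middle_informative => // H.
    exfalso; apply: H; exact: AssP_ext E.
have [v [Jv [Hv _]]] := bP P (proj1 (proj1 (In_filter _ _ _ _) HP)).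
exists v; split => // a Ha; apply/Hv; exact: IP.
Qed.

Definition pr {Q : comUnitRingType} (x : Q) := fun v => exists r, v = r * x.
Definition add1 {Q : comUnitRingType} (I : Q -> Prop) x := fun v => exists i r, I i /\ v = i + r * x.
Definition reg {Q : comUnitRingType} (I : Q -> Prop) a := forall u, I (a * u) -> I u.
Definition socP {Q : comUnitRingType} (I : Q -> Prop) := exists u, ~ I u /\ forall a, nu a -> I (a * u).
Definition Zr {Q : comUnitRingType} := fun v : Q => v = 0.

Lemma pr_ideal (Q : comUnitRingType) (x : Q) : is_ideal (pr x).
Proof.
split.
- by exists 0; rewrite mul0r.
- by move=> a b [r ->] [s ->]; exists (r + s); rewrite mulrDl.
- by move=> t a [r ->]; exists (t * r); rewrite mulrA.
Qed.

Lemma Zr_ideal (Q : comUnitRingType) : is_ideal (@Zr Q).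
Proof. rewrite /Zr; split => //; [by move=> x y -> ->; rewrite addr0|by move=> r x ->; rewrite mulr0]. Qed.

Lemma add1_ideal (Q : comUnitRingType) (I : Q -> Prop) x : is_ideal I -> is_ideal (add1 I x).
Proof.
case=> H0 HD HM; split.
- by exists 0, 0; split => //; rewrite mul0r addr0.
- move=> a b [i [r [Ii ->]]] [j [s [Ij ->]]]; exists (i + j), (r + s); split; [exact: HD|ring].
- move=> t a [i [r [Ii ->]]]; exists (t * i), (t * r); split; [exact: HM|ring].
Qed.

Lemma socP_ext (Q : comUnitRingType) (I I' : Q -> Prop) : socP I -> (forall v, I v <-> I' v) -> socP I'.
Proof. case=> u [Iu Ha] E; exists u; split; first by move/E. by move=> a /Ha /E. Qed.

Lemma lemS (Q : comUnitRingType) (I : Q -> Prop) x y : is_ideal I -> nu y ->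
  reg I x -> reg I y -> socP (add1 I x) -> socP (add1 I y).
Proof.
move=> HI Hy Rx Ry [u [Hu Ha]].
have [i [r [Ii Eu]]] := Ha y Hy.
exists r; split.
  case=> i' [w [Ii' Er]]; apply: Hu.
  have : I (y * (u - w * x)).
    have -> : y * (u - w * x) = i + i' * x.
      have -> : y * (u - w * x) = y * u - y * w * x by ring.
      rewrite Eu Er; ring.
    case: HI => _ HD HM; apply: HD => //; rewrite mulrC; exact: HM.
  move/Ry => H; exists (u - w * x), w; split => //; ring.
move=> a Hna.
have [i2 [t [Ii2 Ea]]] := Ha a Hna.
have : I (x * (a * r - t * y)).
  have -> : x * (a * r - t * y) = y * i2 - a * i.
    have E1 : a * (y * u) = a * (i + r * x) by rewrite Eu.
    have E2 : y * (a * u) = y * (i2 + t * x) by rewrite Ea.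
    have E3 : a * (y * u) = y * (a * u) by ring.
    rewrite E3 E2 in E1.
    have -> : y * i2 - a * i = (y * (i2 + t * x)) - t * x * y - a * i by ring.
    rewrite E1; ring.
  case: (HI) => _ _ HM; apply: (id_sub _ _ _ _ HI); exact: HM.
move/Rx => H; exists (a * r - t * y), t; split => //; ring.
Qed.

Lemma gen1 (Q : comUnitRingType) (a v : Q) : ideal_gen [:: a] v <-> pr a v.
Proof.
split.
  by case/gen_cons => r [y [/gen_nil -> ->]]; exists r; rewrite addr0.
by case=> r ->; apply/gen_cons; exists r, 0; split; [apply/gen_nil|rewrite addr0].
Qed.

Lemma gen2 (Q : comUnitRingType) (a b v : Q) : ideal_gen [:: a; b] v <-> add1 (pr a) b v.
Proof.
split.
  case/gen_cons => r [y [/gen1 [s ->] ->]]; exists (r * a), s; split => //; by exists r.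
case=> i [s [[r ->] ->]]; apply/gen_cons; exists r, (s * b); split => //; by apply/gen1; exists s.
Qed.

Lemma not_reg_zd (Q : comUnitRingType) (I : Q -> Prop) a : ~ reg I a -> zd I a.
Proof.
move=> H; apply: NNPP => H2; apply: H => u Iau; apply: NNPP => Iu; apply: H2; by exists u.
Qed.

Lemma mainQ (Q : comUnitRingType) (f g z1 z2 z3 : Q) :
  noetherian Q -> local_ring Q ->
  nu f -> reg Zr f -> reg Zr g -> reg (pr f) g ->
  nu z1 -> reg Zr z1 -> nu z2 -> reg (pr z1) z2 -> nu z3 -> reg (add1 (pr z1) z2) z3 ->
  exists a, nu a /\ reg (add1 (pr f) g) a.
Proof.
move=> HN HL nf Rf Rg Rfg n1 R1 n2 R12 n3 R123.
have Sz : forall x y, nu y -> reg (add1 (pr x) y) z3 -> ~ socP (add1 (pr x) y).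
  move=> x y ny R [u [Hu Ha]]. exact/Hu/R/Ha.
have [w [nw Rw]] : exists w, nu w /\ reg (pr (f * z1)) w.
  apply: NNPP => H.
  have : socP (pr (f * z1)).
    apply: soc_of => //; first exact: pr_ideal.
    move=> a na; apply: not_reg_zd => Ra; apply: H; by exists a.
  move/socP_ext => /(_ (add1 Zr (f * z1))) H1.
  have H2 : socP (add1 Zr (f * z1)).
    apply: H1 => v; split; first by case=> r ->; exists 0, r; split => //; rewrite add0r.
    by case=> i [r [-> ->]]; exists r; rewrite add0r.
  have : socP (add1 Zr z1).
    apply: (lemS _ _ (f * z1)) => //; first exact: Zr_ideal.
    move=> u; rewrite /Zr -mulrA => /Rf /R1 //.
  case=> u [Hu Ha]; apply: Hu.
  have := Ha z2 n2. case=> i [r [-> E]]. have : pr z1 (z2 * u) by exists r; rewrite E add0r.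
  move/R12 => [c ->]; exists 0, c; split => //; by rewrite add0r.
have Rwf : reg (pr f) w.
  move=> u [c E]. have : pr (f * z1) (w * (u * z1)) by exists c; rewrite mulrA E; ring.
  move/Rw => [d E2]; exists d. apply/eqP; rewrite -subr_eq0; apply/eqP.
  apply: R1; rewrite /Zr. have -> : z1 * (u - d * f) = u * z1 - d * (f * z1) by ring. by rewrite E2 subrr.
have Rw1 : reg (pr z1) w.
  move=> u [c E]. have : pr (f * z1) (w * (u * f)) by exists c; rewrite mulrA E; ring.
  move/Rw => [d E2]; exists d. apply/eqP; rewrite -subr_eq0; apply/eqP.
  apply: Rf; rewrite /Zr. have -> : f * (u - d * z1) = u * f - d * (f * z1) by ring. by rewrite E2 subrr.
have Rswap : forall x, reg Zr x -> reg (pr x) w -> reg (pr w) x.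
  move=> x Rx Rxw u [c E].
  have : pr x (w * c) by exists u; rewrite mulrC -E mulrC.
  move/Rxw => [c' E']; exists c'. apply/eqP; rewrite -subr_eq0; apply/eqP.
  apply: Rx; rewrite /Zr. have -> : x * (u - c' * w) = x * u - w * (c' * x) by ring.
  by rewrite E E' mulrC subrr.
have Ext : forall (a b : Q) v, add1 (pr a) b v <-> add1 (pr b) a v.
  move=> a b v; split; case=> i [r [[s ->] ->]].
    exists (r * b), s; split; [by exists r|by rewrite addrC].
  exists (r * a), s; split; [by exists r|by rewrite addrC].
apply: NNPP => H.
have S1 : socP (add1 (pr f) g).
  apply: soc_of => //; first by apply: add1_ideal; exact: pr_ideal.
  move=> a na; apply: not_reg_zd => Ra; apply: H; by exists a.
have S2 : socP (add1 (pr f) w) by apply: (lemS _ _ g) => //; exact: pr_ideal.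
have S3 : socP (add1 (pr w) f) by apply: (socP_ext _ _ _ S2) => v; apply: Ext.
have S4 : socP (add1 (pr w) z1).
  apply: (lemS _ _ f) => //; [exact: pr_ideal|exact: Rswap|exact: Rswap].
have S5 : socP (add1 (pr z1) w) by apply: (socP_ext _ _ _ S4) => v; apply: Ext.
have S6 : socP (add1 (pr z1) z2) by apply: (lemS _ _ w) => //; exact: pr_ideal.
exact: (Sz _ _ n2 R123 S6).
Qed.

Theorem lemma2p6 (Q : comUnitRingType) (f g : Q) :
  noetherian Q -> local_ring Q ->
  regular_elt f -> regular_elt g ->
  (forall z : Q, ((exists a, z = a * f) /\ (exists b, z = b * g)) <->
                 (exists c, z = c * (f * g))) ->
  depth_gt Q 2 ->
  forall (A : comUnitRingType) (pi : {rmorphism Q -> A}),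
    (forall a : A, exists q : Q, pi q = a) ->
    (forall q : Q, pi q = 0 <-> exists c, q = c * (f * g)) ->
    exists a : A, regular_on_quot [:: pi f; pi g] a.
Proof.
move=> HN HL [nf Rf] [ng Rg] Hint [s [Hs [HR _]]] A pi Hsurj Hker.
have RZ : forall x : Q, (forall b, x * b = 0 -> b = 0) -> reg Zr x by move=> x H u /H.
have Rfg : reg (pr f) g.
  move=> u [c E].
  have [d Ed] : exists c0, g * u = c0 * (f * g).
    apply/Hint; split; [by exists c|by exists u; rewrite mulrC].
  exists d; apply/eqP; rewrite -subr_eq0; apply/eqP; apply: Rg.
  have -> : g * (u - d * f) = g * u - d * (f * g) by ring. by rewrite Ed subrr.
case: s Hs HR => [|z1 [|z2 [|z3 s']]] // _ HR.
have [n1 R1] := HR 0%N erefl. have [n2 R2] := HR 1%N erefl. have [n3 R3] := HR 2%N erefl.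
rewrite /= in R1 R2 R3 n1 n2 n3.
have [q [nq Rq]] : exists a, nu a /\ reg (add1 (pr f) g) a.
  have Rf' : reg Zr f by apply: RZ.
  have Rg' : reg Zr g by apply: RZ.
  have R1' : reg Zr z1 by move=> u Hu; apply: (proj1 (gen_nil _ u)); apply: R1; apply: (proj2 (gen_nil _ _)).
  have R2' : reg (pr z1) z2 by move=> u Hu; apply: (proj1 (gen1 _ _ u)); apply: R2; apply: (proj2 (gen1 _ _ _)).
  have R3' : reg (add1 (pr z1) z2) z3 by move=> u Hu; apply: (proj1 (gen2 _ _ _ u)); apply: R3; apply: (proj2 (gen2 _ _ _ _)).
  exact: (mainQ _ f g z1 z2 z3).
have nfg : nu (f * g) by apply: nu_mul.
exists (pi q); split.
  apply/negP => /unitrPr [y Ey]. have [r Er] := Hsurj y.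
  have : pi (q * r - 1) = 0 by rewrite rmorphB rmorphM rmorph1 Er Ey subrr.
  case/Hker => c Ec.
  have Hu : (q * r) \is a GRing.unit.
    apply: NNPP => /negP Hn.
    have := nu_sub _ _ _ HN HL Hn (nu_mul _ _ c nfg).
    have -> : q * r - c * (f * g) = 1 by rewrite -Ec; ring.
    exact: nu1.
  move: Hu; rewrite unitrM => /andP [Hq _]. by move/negP: nq.
move=> b /gen2 [i [t [[r Ei] Eb]]].
have [b' Eb'] := Hsurj b. have [r' Er'] := Hsurj r. have [t' Et'] := Hsurj t.
have : pi (q * b' - (r' * f + t' * g)) = 0.
  by rewrite rmorphB rmorphD !rmorphM Eb' Er' Et' Eb Ei subrr.
case/Hker => c Ec.
have : add1 (pr f) g (q * b').
  exists ((r' + c * g) * f), t'; split; first by exists (r' + c * g).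
  have -> : q * b' = (q * b' - (r' * f + t' * g)) + (r' * f + t' * g) by ring.
  rewrite Ec; ring.
case/Rq => i2 [t2 [[e ->] Eb2]].
apply/gen2; exists (pi e * pi f), (pi t2); split; first by exists (pi e).
by rewrite -Eb' Eb2 rmorphD !rmorphM.
Qed.
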